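(* Consider the repeated service game described in the context, with $t>0$, $\tau\in(0,t)$, $c>0$, $p>c$, $d\in(0,1)$, $w\in(0,1)$, and a strictly decreasing continuous utility $\Gamma:[0,1]\to(0,\infty)$ with $\Gamma(0)>p$. If the cooperation conditions hold, then $$d<\min\left\{1-\frac{c}{p},\ \Gamma^{-1}(p)\right\}\qquad\text{and}\qquad w>\max\left\{\frac{1-\tau/t}{p/c-\tau/t},\ 1-\frac{1-p/\Gamma(0)}{\tau/t}\right\}.$$
   Context: A service provider (SP) and a client interact in rounds of duration $t>0$. The parameters are: trial time $\tau$, SP cost per unit time $c$, price per unit time $p$, channel outage probability $d$, continuation probability (cooperation willingness) $w$, and a client utility function $\Gamma$. When both players use COOP, the long-term payoffs are $$\Pi_s^{\mathrm C}=\frac{(1-d)(p-c)t-dc\tau}{1-(1-d)w},\qquad \Pi_c^{\mathrm C}=\frac{(1-d)(\Gamma(d)-p)t+d\Gamma(d)\tau}{1-(1-d)w}.$$ For an integer $j\ge 2$, the long-term payoff of a player using the defect-and-recover-after-$j$-rounds strategy JDEF$_j$ against COOP is: - for the SP, $$\Pi_s^{(j)}=\frac{(1-d)\big(pt-c\tau-w^{j-1}c(t-\tau)\big)-dc\tau}{1-(1-d)w^{j}};$$ - for the client, $$\Pi_c^{(j)}=\frac{(1-d)\big(\Gamma(d)\tau+w^{j-1}(\Gamma(d)(t-\tau)-pt)\big)+d\Gamma(d)\tau}{1-(1-d)w^{j}}.$$ The cooperation conditions hold when both of the following hold: - $\Pi_s^{\mathrm C}\ge\Pi_s^{(j)}$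 for all integers $j\ge2$; - $\Pi_c^{\mathrm C}\ge \Pi_c^{(j)}$ for all integers $j\ge 2$. For $0<y\le\Gamma(0)$, we write $\Gamma^{-1}(y):=\sup\{x\in[0,1]:\Gamma(x)\ge y\}$. This coincides with the inverse of $\Gamma$ whenever $y$ is in the range of $\Gamma$. *)

(* Defs.v *)
From HB Require Import structures.
From mathcomp Require Import all_boot all_order all_algebra.
From mathcomp Require Import all_classical all_reals all_analysis.
Set Implicit Arguments. Unset Strict Implicit. Unset Printing Implicit Defensive.
Import Order.TTheory GRing.Theory Num.Theory.
Local Open Scope classical_set_scope.
Local Open Scope ring_scope.

Section Payoffs.
Variable R : realType.

(* Long-term payoffs when both players use COOP. *)
Definition PiC_s (t c p d w tau : R) : R :=
  ((1 - d) * (p - c) * t - d * c * tau) / (1 - (1 - d) * w).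
Definition PiC_c (Gamma : R -> R) (t p d w tau : R) : R :=
  ((1 - d) * (Gamma d - p) * t + d * Gamma d * tau) / (1 - (1 - d) * w).

(* Long-term payoff of JDEF_j against COOP. *)
Definition Pij_s (t c p d w tau : R) (j : nat) : R :=
  ((1 - d) * (p * t - c * tau - w ^+ j.-1 * c * (t - tau)) - d * c * tau)
  / (1 - (1 - d) * w ^+ j).
Definition Pij_c (Gamma : R -> R) (t p d w tau : R) (j : nat) : R :=
  ((1 - d) * (Gamma d * tau + w ^+ j.-1 * (Gamma d * (t - tau) - p * t))
     + d * Gamma d * tau)
  / (1 - (1 - d) * w ^+ j).

Definition cooperation_conditions (Gamma : R -> R) (t c p d w tau : R) : Prop :=
  (forall j : nat, (2 <= j)%N -> Pij_s t c p d w tau j <= PiC_s t c p d w tau) /\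
  (forall j : nat, (2 <= j)%N -> Pij_c Gamma t p d w tau j <= PiC_c Gamma t p d w tau).

Definition Gamma_inv (Gamma : R -> R) (y : R) : R :=
  sup [set x : R | 0 <= x <= 1 /\ y <= Gamma x].

End Payoffs.

(* Main.v *)
Require Import Defs.
From HB Require Import structures.
From mathcomp Require Import all_boot all_order all_algebra.
From mathcomp Require Import all_classical all_reals all_analysis.
From mathcomp Require Import ring lra.
Import Order.TTheory GRing.Theory Num.Theory numFieldNormedType.Exports.
Local Open Scope classical_set_scope.
Local Open Scope ring_scope.

Theorem corollary3 (R : realType) (t tau c p d w : R) (Gamma : R -> R) :
  0 < t -> 0 < tau -> tau < t -> 0 < c -> c < p ->
  0 < d -> d < 1 -> 0 < w -> w < 1 ->
  {within `[0%R, 1%R], continuous Gamma} ->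
  (forall x y : R, 0 <= x -> x < y -> y <= 1 -> Gamma y < Gamma x) ->
  (forall x : R, 0 <= x <= 1 -> 0 < Gamma x) ->
  p < Gamma 0 ->
  cooperation_conditions Gamma t c p d w tau ->
  (d < Num.min (1 - c / p) (Gamma_inv Gamma p) /\
   Num.max ((1 - tau / t) / (p / c - tau / t))
           (1 - (1 - p / Gamma 0) / (tau / t)) < w).
Proof.
move=> t0 tau0 taut c0 cp d0 d1 w0 w1 Gc Gdec Gpos pG0 [Hs Hc].
have q0 : 0 < 1 - d by lra.
have qw : 0 < (1 - d) * w by rewrite mulr_gt0.
have qw1 : (1 - d) * w < 1.
  have : (1 - d) * w < (1 - d) * 1 by rewrite ltr_pM2l.
  lra.
have D1 : 0 < 1 - (1 - d) * w by lra.
have qw2 : (1 - d) * w ^+ 2 < 1.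
  have : (1 - d) * w ^+ 2 < (1 - d) * w.
    by rewrite ltr_pM2l // expr2 gtr_pMl.
  lra.
have D2 : 0 < 1 - (1 - d) * w ^+ 2 by lra.
have q1w : 0 < (1 - d) * (1 - w) by rewrite mulr_gt0 //; lra.
have S : c * (t - tau) <= w * ((1 - d) * p * t - c * tau).
  have := Hs 2%N isT; rewrite /Pij_s /PiC_s /=.
  rewrite ler_pdivrMr // [_ / _ * _]mulrAC ler_pdivlMr //.

  set X := w * ((1 - d) * p * t - c * tau) - c * (t - tau).
  move=> H.
  have E : ((1 - d) * (p - c) * t - d * c * tau) * (1 - (1 - d) * w ^+ 2)
     - ((1 - d) * (p * t - c * tau - w ^+ 1 * c * (t - tau)) - d * c * tau) * (1 - (1 - d) * w)
     = (1 - d) * (1 - w) * X by rewrite /X; ring.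
  have : 0 <= (1 - d) * (1 - w) * X by lra.
  rewrite pmulr_rge0 // /X; lra.
have G : p * t <= Gamma d * (t - tau + w * tau).
  have := Hc 2%N isT; rewrite /Pij_c /PiC_c /=.
  rewrite ler_pdivrMr // [_ / _ * _]mulrAC ler_pdivlMr //.

  set X := Gamma d * (t - tau + w * tau) - p * t.
  move=> H.
  have E : ((1 - d) * (Gamma d - p) * t + d * Gamma d * tau) * (1 - (1 - d) * w ^+ 2)
     - ((1 - d) * (Gamma d * tau + w ^+ 1 * (Gamma d * (t - tau) - p * t)) + d * Gamma d * tau) * (1 - (1 - d) * w)
     = (1 - d) * (1 - w) * X by rewrite /X; ring.
  have : 0 <= (1 - d) * (1 - w) * X by lra.
  rewrite pmulr_rge0 // /X; lra.
have Y0 : 0 < (1 - d) * p * t - c * tau.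
  have ct : 0 < c * (t - tau) by rewrite mulr_gt0 //; lra.
  have : 0 < w * ((1 - d) * p * t - c * tau) by lra.
  by rewrite pmulr_rgt0.
have wY : w * ((1 - d) * p * t - c * tau) < (1 - d) * p * t - c * tau.
  by rewrite gtr_pMl.
have qp : c < (1 - d) * p.
  have : c * t < (1 - d) * p * t by lra.
  by rewrite ltr_pM2r.
have dpt : 0 < d * p * t by rewrite !mulr_gt0 //; lra.
have Gd0 : 0 < Gamma d by apply: Gpos; rewrite (ltW d0) (ltW d1).
have GdG0 : Gamma d < Gamma 0 by apply: Gdec => //; exact: ltW.
have Tw : 0 < t - tau + w * tau by have := mulr_gt0 w0 tau0; lra.
have Gp : p < Gamma d.
  have : Gamma d * (t - tau + w * tau) < Gamma d * t.
    rewrite ltr_pM2l //; have : w * tau < tau by rewrite gtr_pMl.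
    lra.
  move=> H; have : p * t < Gamma d * t by lra.
  by rewrite ltr_pM2r.
split.
  rewrite lt_min; apply/andP; split.
    have : c / p < 1 - d by rewrite ltr_pdivrMr //; lra.
    lra.
  have [Gin _ _] := (continuous_within_itvP Gamma ltr01).1 Gc.
  have Gcd := Gin d.
  have : d \in `]0, 1[ by rewrite in_itv /= d0 d1.
  move=> /Gcd {}Gcd.
  have := cvgr_gt (Gamma d) Gcd p Gp.
  move=> Hn; have [e e0 He] := (nbhs_ballP d _).1 (Hn _).
  set m := Num.min e (1 - d).
  have m0 : 0 < m by rewrite lt_min e0 /=; lra.
  have me : m <= e by rewrite ge_min lexx.
  have m1 : m <= 1 - d by rewrite ge_min lexx orbT.
  have Hx : p < Gamma (d + m / 2).
    apply: He; rewrite /ball /=.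
    have -> : d - (d + m / 2) = - (m / 2) by ring.
    rewrite normrN ger0_norm; lra.
  have Hub : has_ubound [set x : R | 0 <= x <= 1 /\ p <= Gamma x].
    by exists 1 => x /= [/andP [_ ?] _].
  have Hin : [set x : R | 0 <= x <= 1 /\ p <= Gamma x] (d + m / 2).
    split; last exact: ltW.
    apply/andP; split; lra.
  have := ub_le_sup Hub Hin.
  rewrite /Gamma_inv; apply: lt_le_trans.
  lra.
rewrite gt_max; apply/andP; split.
  have pc0 : 0 < p * t - c * tau by lra.
  have -> : (1 - tau / t) / (p / c - tau / t) = c * (t - tau) / (p * t - c * tau).
    by field; repeat (apply/andP; split); apply: lt0r_neq0; lra.
  have wdpt : 0 < w * (d * p * t) by rewrite mulr_gt0.
  rewrite ltr_pdivrMr //; lra.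
have -> : 1 - (1 - p / Gamma 0) / (tau / t) = 1 - (Gamma 0 - p) * t / (Gamma 0 * tau).
  by field; repeat (apply/andP; split); apply: lt0r_neq0; lra.
have G00 : 0 < Gamma 0 by lra.
have : p * t < Gamma 0 * (t - tau + w * tau).
  by have := ltr_pM2r Tw (Gamma d) (Gamma 0); rewrite GdG0; lra.
move=> H.
have E : Gamma 0 * (t - tau + w * tau) = Gamma 0 * t - Gamma 0 * tau * (1 - w) by ring.
have E2 : (Gamma 0 - p) * t = Gamma 0 * t - p * t by ring.
have : Gamma 0 * tau * (1 - w) < (Gamma 0 - p) * t by lra.
move=> H2.
have : 1 - w < (Gamma 0 - p) * t / (Gamma 0 * tau).
  by rewrite ltr_pdivlMr ?mulr_gt0 //; lra.
lra.
Qed.
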